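(* Suppose (C2) holds. Then the LMS sampling design is a high entropy sampling design. Moreover, under each of SRSWOR, the LMS design and any HE$\pi$PS design, for $\mathbb P$-almost every $\omega$ there are constants $M,M'>0$ such that for all sufficiently large $\nu$, $M\le n^{-1}N\pi_i\le M'$ for all $1\le i\le N$.
   Context: Sequence of nested finite populations of $N=N_\nu$ units with sample size $n=n_\nu<N$, $N,n\to\infty$ as $\nu\to\infty$; size variable values $X_1,\dots,X_N$ are i.i.d. positive random variables on $(\Omega,\mathcal F,\mathbb P)$ (part of i.i.d. population records). A sampling design is $P(s,\omega)$, a probability on the size-$n$ subsets $s$ for each $\omega$; $\pi_i=\sum_{s\ni i}P(s,\omega)$. SRSWOR: each $s$ with probability $\binom Nn^{-1}$. LMS: first unit $U_i$ drawn with probability $X_i/\sum_jX_j$, then $n-1$ units by SRSWOR from the remaining $N-1$. Rejective design (parameters $\alpha_i>0$, $\sum\alpha_i=1$): $n$ draws with replacement with probabilities $\alpha_i$, repeated until $n$ distinct units are drawn. A design is high entropy if $\sum_sP(s,\omega)\log(P(s,\omega)/R(s,\omega))\to0$ as $\nu\to\infty$ a.s. $[\mathbb P]$ for some rejective design $R(s,\omega)$. $\pi$PS: $\pi_i=nX_i/\sum_jX_j$. HE$\pi$PS: high entropy and $\pi$PS. (C2): $X_i\le b$ a.s. for some $0<b<\infty$, $E(X_i^{-2})<\infty$, and $\max_{i\le N}X_i/\min_{i\le N}X_i=O(1)$ as $\nu\to\infty$ a.s. $[\mathbb P]$. *)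

(* Defs.v *)
From HB Require Import structures.
From mathcomp Require Import all_boot all_order all_algebra.
From mathcomp Require Import all_classical all_reals all_analysis.

Unset Implicit Arguments.
Unset Strict Implicit.
Unset Printing Implicit Defensive.

Import Order.TTheory GRing.Theory Num.Theory.
Import numFieldNormedType.Exports.

Local Open Scope classical_set_scope.
Local Open Scope ring_scope.

Section Defs.
Context {R : realType} {d : measure_display} {T : measurableType d}.
Variable P : probability T R.

Definition mutually_independent (X : nat -> {RV P >-> R}) : Prop :=
  forall (s : seq nat) (A : nat -> set R),
    uniq s -> (forall i, measurable (A i)) ->
    P (\bigcap_(i in [set` s]) (X i @^-1` A i)) =
    (\prod_(i <- s) P (X i @^-1` A i))%E.

Definition identically_distributed (X : nat -> {RV P >-> R}) : Prop :=
  forall i (A : set R), measurable A ->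
    P (X i @^-1` A) = P (X 0%N @^-1` A).

Definition iid (X : nat -> {RV P >-> R}) : Prop :=
  mutually_independent X /\ identically_distributed X.

(** Population of stage nu = units 0 .. N nu - 1 (nested populations).
    A sampling design: for each nu and omega a function on subsets of
    the population. *)
Definition design (N : nat -> nat) : Type :=
  forall nu : nat, T -> {set 'I_(N nu)} -> R.

Definition is_design (N n : nat -> nat) (D : design N) : Prop :=
  forall nu omega,
    (forall s : {set 'I_(N nu)}, 0 <= D nu omega s) /\
    (forall s : {set 'I_(N nu)}, #|s| != n nu -> D nu omega s = 0) /\
    \sum_(s : {set 'I_(N nu)}) D nu omega s = 1.

Definition incl_prob (N : nat -> nat) (D : design N) nu omega
    (i : 'I_(N nu)) : R :=
  \sum_(s : {set 'I_(N nu)} | i \in s) D nu omega s.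

Definition pop_total (X : nat -> T -> R) (N : nat -> nat) nu omega : R :=
  \sum_(j < N nu) X j omega.

Definition SRSWOR (N n : nat -> nat) : design N :=
  fun nu omega s =>
    if #|s| == n nu then ('C(N nu, n nu))%:R^-1 else 0.

(** LMS: first unit i drawn with probability X_i / sum_j X_j, then
    n - 1 units by SRSWOR among the remaining N - 1 units. *)
Definition LMS (N n : nat -> nat) (X : nat -> T -> R) : design N :=
  fun nu omega s =>
    if #|s| == n nu then
      \sum_(i in s) (X i omega / pop_total X N nu omega) *
                    ('C((N nu).-1, (n nu).-1))%:R^-1
    else 0.

(** Rejective design with parameters alpha: n draws with replacement with
    probabilities alpha_i, repeated until n distinct units are drawn; i.e.
    the law of the drawn set conditional on the n draws being distinct. *)
Definition rejective (N n : nat -> nat)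
    (alpha : forall nu : nat, T -> 'I_(N nu) -> R) : design N :=
  fun nu omega s =>
    (\sum_(t : {ffun 'I_(n nu) -> 'I_(N nu)} |
             injectiveb t && ((t @: [set: 'I_(n nu)]) == s))
        \prod_(j < n nu) alpha nu omega (t j)) /
    (\sum_(t : {ffun 'I_(n nu) -> 'I_(N nu)} | injectiveb t)
        \prod_(j < n nu) alpha nu omega (t j)).

Definition rejective_params (N : nat -> nat)
    (alpha : forall nu : nat, T -> 'I_(N nu) -> R) : Prop :=
  forall nu omega,
    (forall i, 0 < alpha nu omega i) /\ \sum_(i < N nu) alpha nu omega i = 1.

(** Kullback-Leibler divergence sum_s P(s) log (P(s)/R(s))
    (with the convention 0 log 0 = 0, automatic since ln 0 = 0). *)
Definition KL (N : nat -> nat) (D D' : design N) nu omega : R :=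
  \sum_(s : {set 'I_(N nu)}) D nu omega s * ln (D nu omega s / D' nu omega s).

Definition high_entropy (N n : nat -> nat) (D : design N) : Prop :=
  exists alpha : forall nu : nat, T -> 'I_(N nu) -> R,
    rejective_params N alpha /\
    {ae P, forall omega,
      (fun nu => KL N D (rejective N n alpha) nu omega) @ \oo --> (0 : R)}.

Definition piPS (N n : nat -> nat) (X : nat -> T -> R) (D : design N) : Prop :=
  {ae P, forall omega, \forall nu \near \oo, forall i : 'I_(N nu),
      incl_prob N D nu omega i = (n nu)%:R * X i omega / pop_total X N nu omega}.

Definition incl_bounded (N n : nat -> nat) (D : design N) : Prop :=
  {ae P, forall omega, exists M M' : R, 0 < M /\ 0 < M' /\
     \forall nu \near \oo, forall i : 'I_(N nu),
        M <= (n nu)%:R^-1 * (N nu)%:R * incl_prob N D nu omega i <= M'}.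

Definition pop_max (X : nat -> T -> R) (N : nat -> nat) nu omega : R :=
  \big[Num.max/0]_(i < N nu) X i omega.
Definition pop_min (X : nat -> T -> R) (N : nat -> nat) nu omega : R :=
  \big[Num.min/X 0%N omega]_(i < N nu) X i omega.

Definition C2 (X : nat -> {RV P >-> R}) (N : nat -> nat) : Prop :=
  (exists b : R, 0 < b /\ forall i, {ae P, forall omega, X i omega <= b}) /\
  (forall i, (\int[P]_omega ((X i omega) ^-2)%:E < +oo)%E) /\
  {ae P, forall omega, exists K : R,
     \forall nu \near \oo, pop_max X N nu omega / pop_min X N nu omega <= K}.

End Defs.

(* Main.v *)
Require Import Defs.
From HB Require Import structures.
From mathcomp Require Import all_boot all_order all_algebra.
From mathcomp Require Import all_classical all_reals all_analysis.
From HB Require Import structures.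
From mathcomp Require Import all_boot all_order all_algebra.
From mathcomp Require Import all_classical all_reals all_analysis.
From mathcomp Require Import zify ring lra.

Import Order.TTheory GRing.Theory Num.Theory.
Import numFieldNormedType.Exports.
Local Open Scope ring_scope.
Local Close Scope classical_set_scope.

Section Comb.
Variable N : nat.

Definition cnt k (A : {set 'I_N}) :=
  #|[set s : {set 'I_N} | (#|s| == k) && (A \subset s)]|.

Lemma cnt_eq k A : (k <= N)%N ->
  cnt k A = 'C(N - #|A|, N - k).
Proof.
move=> kN.
rewrite /cnt -(card_imset _ (@finset.setC_inj _)).
have -> : [set ~: x | x in [set s : {set 'I_N} | (#|s| == k) && (A \subset s)]]
   = [set u : {set 'I_N} | u \subset ~: A & #|u| == (N - k)%N].
  apply/setP => u; rewrite !inE.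
  apply/imsetP/idP.
    move=> [s]; rewrite inE => /andP[/eqP sk As] ->.
    rewrite finset.setCS As /=.
    have := cardsC s; rewrite card_ord sk => H.
    by apply/eqP; rewrite -[in RHS]H addKn.
  move=> /andP[uA /eqP uk]; exists (~: u); last by rewrite finset.setCK.
  rewrite inE -finset.setCS finset.setCK uA andbT.
  have := cardsC u; rewrite card_ord uk => H.
  apply/eqP; lia.
rewrite cards_draws.
have := cardsC A; rewrite card_ord => H.
congr (binomial _ _); lia.
Qed.

Lemma cnt1 k i : (0 < k <= N)%N -> cnt k [set i] = 'C(N.-1, k.-1).
Proof.
move=> /andP[k0 kN]; rewrite cnt_eq // cards1.
rewrite -(bin_sub (n := N.-1) (m := k.-1)); last lia.
congr (binomial _ _); lia.
Qed.

Lemma cnt2 k i j : i != j -> (1 < k <= N)%N -> cnt k [set i; j] = 'C(N - 2, k - 2).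
Proof.
move=> ij /andP[k0 kN]; rewrite cnt_eq // cards2 ij.
rewrite -(bin_sub (n := (N - 2)%N) (m := (k - 2)%N)); last lia.
congr (binomial _ _); lia.
Qed.

Variable R : realType.

Lemma sum_swap (P : pred {set 'I_N}) (F : {set 'I_N} -> 'I_N -> R) :
  \sum_(s : {set 'I_N} | P s) \sum_(i in s) F s i =
  \sum_i \sum_(s : {set 'I_N} | P s && (i \in s)) F s i.
Proof.
under eq_bigr do rewrite big_mkcond /=.
rewrite exchange_big /=; apply: eq_bigr => i _.
by rewrite big_mkcondr.
Qed.

Lemma sum_cnst (P : pred {set 'I_N}) (c : R) :
  \sum_(s : {set 'I_N} | P s) c = c * #|[set s | P s]|%:R.
Proof. by rewrite sumr_const cardsE mulr_natr. Qed.

Lemma sum1_lin (k : nat) (f : 'I_N -> R) :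
  \sum_(s : {set 'I_N} | #|s| == k) \sum_(i in s) f i = \sum_i f i * (cnt k [set i])%:R.
Proof.
rewrite sum_swap; apply: eq_bigr => i _.
rewrite sum_cnst /cnt; congr (_ * _%:R); apply: eq_card => s.
by rewrite !inE mathcomp.boot.finset.sub1set.
Qed.

Lemma sum1_incl (k : nat) i0 (f : 'I_N -> R) :
  \sum_(s : {set 'I_N} | (#|s| == k) && (i0 \in s)) \sum_(i in s) f i = \sum_i f i * (cnt k [set i0; i])%:R.
Proof.
rewrite sum_swap; apply: eq_bigr => i _.
rewrite sum_cnst /cnt; congr (_ * _%:R); apply: eq_card => s.
by rewrite !inE mathcomp.boot.finset.subUset !mathcomp.boot.finset.sub1set andbA.
Qed.

Lemma sum2_quad (k : nat) (f : 'I_N -> R) :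
  \sum_(s : {set 'I_N} | #|s| == k) (\sum_(i in s) f i) ^+ 2 =
  \sum_i \sum_j f i * f j * (cnt k [set i; j])%:R.
Proof.
under eq_bigr do rewrite expr2 big_distrl /=.
under eq_bigr do under eq_bigr do rewrite big_distrr /=.
rewrite sum_swap; apply: eq_bigr => i _.
rewrite sum_swap; apply: eq_bigr => j _.
rewrite sum_cnst /cnt; congr (_ * _%:R); apply: eq_card => s.
by rewrite !inE mathcomp.boot.finset.subUset !mathcomp.boot.finset.sub1set andbA.
Qed.
End Comb.


Lemma ln_le_sub1 {R : realType} {y : R} : 0 < y -> ln y <= y - 1.
Proof.
move=> y0; have := @le_ln1Dx R (y - 1).
have -> : 1 + (y - 1) = y by ring.
by apply; lra.
Qed.

Lemma ln_ge_sub1 {R : realType} {y : R} : 0 < y -> 1 - y^-1 <= ln y.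
Proof.
move=> y0; have := @ln_le_sub1 R y^-1; rewrite invr_gt0 => /(_ y0).
rewrite lnV ?posrE //; lra.
Qed.

Lemma c_ineq (R : realType) (N k c0 c1 c2 : R) : 0 < k -> k <= N -> 1 < N ->
  0 < c1 -> 0 <= c2 -> N * c1 = k * c0 -> (N - 1) * c2 = (k - 1) * c1 ->
  c0 * c2 <= c1 ^+ 2.
Proof.
move=> k0 kN N1 c10 c20 h1 h2.
have H : (k * (N - 1)) * (c0 * c2) = (N * (k - 1)) * c1 ^+ 2.
  by rewrite expr2 mulrACA h2 mulrC -mulrA -h1; ring.
have kp : 0 < k * (N - 1) by apply: mulr_gt0; lra.
rewrite -(ler_pM2l kp) H ler_pM2r ?exprn_gt0 //; nra.
Qed.

Lemma alg_bound (R : realType) (N k c0 c1 c2 T Q : R) : 0 < k -> k <= N -> 1 < N ->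
  0 < c1 -> 0 <= c2 -> N * c1 = k * c0 -> (N - 1) * c2 = (k - 1) * c1 ->
  0 < T -> 0 <= Q ->
  c0 * (c1 * Q + c2 * (T ^+ 2 - Q)) / (T * c1) ^+ 2 - 1 <= N * Q / (k * T ^+ 2).
Proof.
move=> k0 kN N1 c10 c20 h1 h2 T0 Q0.
have b1 := @c_ineq R N k c0 c1 c2 k0 kN N1 c10 c20 h1 h2.
have c0e : c0 = N * c1 / k by rewrite h1 mulrC mulKf // gt_eqF.
set beta := c0 * c2 / c1 ^+ 2.
have be1 : beta <= 1 by rewrite /beta ler_pdivrMr ?exprn_gt0 // mul1r.
have c00 : 0 <= c0.
  by rewrite c0e; apply: divr_ge0; [apply: mulr_ge0|]; lra.
have be0 : 0 <= beta.
  by rewrite /beta; apply: divr_ge0; [apply: mulr_ge0 | apply: exprn_ge0; apply: ltW].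
set q := Q / T ^+ 2.
have q0 : 0 <= q by rewrite /q divr_ge0 // exprn_ge0 // ltW.
have -> : c0 * (c1 * Q + c2 * (T ^+ 2 - Q)) / (T * c1) ^+ 2 - 1 =
   N * Q / (k * T ^+ 2) + (beta * (1 - q) - 1).
  rewrite /beta /q c0e; field.
  by rewrite !gt_eqF.
nra.
Qed.

Lemma pi_alg (R : realType) (N k a b r : R) : 2 <= k -> k < N -> 0 <= a <= 1 ->
  (N - 1) * b = k - 1 -> N * a <= r ->
  2^-1 <= k^-1 * N * (a + (1 - a) * b) <= r + 1.
Proof.
move=> k2 kN /andP[a0 a1] hb har.
have N1 : 0 < N - 1 by lra.
have b0 : 0 <= b.
  have : 0 <= (N - 1) * b by rewrite hb; lra.
  by rewrite pmulr_rge0.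
have b1 : b <= 1.
  have : (N - 1) * b <= (N - 1) * 1 by rewrite hb; lra.
  by rewrite ler_pM2l.
have kp : 0 < k by lra.
rewrite -mulrA; apply/andP; split.
  rewrite ler_pdivlMl // mulrC.
  have h1 : b <= a + (1 - a) * b by nra.
  have h2 : k <= 2 * (N * b) by nra.
  nra.
rewrite ler_pdivrMl //.
have h3 : N * ((1 - a) * b) <= k by nra.
have r0 : 0 <= r by nra.
have h4 : r <= k * r by nra.
rewrite mulrDr mulrDr mulr1; lra.
Qed.


Lemma rej_unif (R : realType) (N k : nat) (alpha : 'I_N -> R) (a : R) (mA : mem_pred 'I_k) :
  (k < N)%N -> a != 0 -> (forall i, alpha i = a) -> (forall j, in_mem j mA) ->
  forall s : {set 'I_N},
  (\sum_(t : {ffun 'I_k -> 'I_N} |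
             injectiveb t && (imset t mA == s))
        \prod_(j < k) alpha (t j)) /
    (\sum_(t : {ffun 'I_k -> 'I_N} | injectiveb t)
        \prod_(j < k) alpha (t j))
  = if #|s| == k then ('C(N, k))%:R^-1 else 0.
Proof.
move=> kN a0 ha hA s.
have e : forall t : {ffun 'I_k -> 'I_N}, imset t mA = t @: [set: 'I_k].
  move=> t; apply/setP => y; apply/imsetP/imsetP => [][j _ ->]; exists j => //.
under eq_bigl do rewrite e.
under eq_bigr do rewrite (eq_bigr (fun _ => a)) // prodr_const card_ord.
under [X in _ / X]eq_bigr do rewrite (eq_bigr (fun _ => a)) // prodr_const card_ord.
rewrite !sumr_const.
have -> : #|[pred t : {ffun 'I_k -> 'I_N} | injectiveb t]| = (N ^_ k)%N.
  by rewrite -[in RHS](card_ord N) -[in RHS](card_ord k) -card_inj_ffuns; apply: eq_card => t; rewrite inE.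
have ak : a ^+ k != 0 by rewrite expf_neq0.
have Nk : (N ^_ k)%:R != 0 :> R by rewrite pnatr_eq0 -lt0n ffact_gt0 ltnW.
case: eqP => sk.
  have -> : #|[pred t : {ffun 'I_k -> 'I_N} | injectiveb t && (t @: [set: 'I_k] == s)]| = (k`!)%N.
    transitivity (#|s| ^_ #|'I_k|)%N; last by rewrite sk card_ord ffactnn.
    rewrite -(card_inj_ffuns_on _ (fun y => y \in s)).
    apply: eq_card => t; rewrite !inE.
    apply/andP/andP => [[it /eqP <-]|[/ffun_onP ts it]]; split => //.
      by apply/ffun_onP => j; apply: imset_f.
    rewrite eqEcard; apply/andP; split.
      by apply/fintype.subsetP => y /imsetP [j _ ->]; exact: ts.
    rewrite card_imset; last by apply/injectiveP.
    by rewrite cardsT card_ord sk.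
  rewrite -bin_ffact -(mulr_natr (a ^+ k) (k`!)) -(mulr_natr (a ^+ k) ('C(N, k) * k`!)) natrM.
  have f0 : (k`!)%:R != 0 :> R by rewrite pnatr_eq0 -lt0n fact_gt0.
  have C0 : ('C(N, k))%:R != 0 :> R by rewrite pnatr_eq0 -lt0n bin_gt0 ltnW.
  by field; rewrite f0 C0 ak.
have -> : #|[pred t : {ffun 'I_k -> 'I_N} | injectiveb t && (t @: [set: 'I_k] == s)]| = 0%N.
  apply: eq_card0 => t; rewrite !inE.
  apply/negP => /andP [/injectiveP it /eqP ts]; apply: sk.
  by rewrite -ts card_imset // cardsT card_ord.
by rewrite mulr0n mul0r.
Qed.



Section Fixed.
Variables (R : realType) (N k : nat) (x : 'I_N -> R).
Hypothesis xpos : forall i, 0 < x i.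
Hypothesis kN : (k < N)%N.
Hypothesis k0 : (0 < k)%N.

Let Tot := \sum_(j < N) x j.
Let c0 : R := ('C(N, k))%:R.
Let c1 : R := ('C(N.-1, k.-1))%:R.
Let c2 : R := ('C(N - 2, k - 2))%:R.

Lemma c0_gt0 : 0 < c0.
Proof. by rewrite /c0 ltr0n bin_gt0 ltnW. Qed.
Lemma c1_gt0 : 0 < c1.
Proof. rewrite /c1 ltr0n bin_gt0; lia. Qed.
Lemma c2_ge0 : 0 <= c2.
Proof. by rewrite /c2 ler0n. Qed.

Lemma F1 : N%:R * c1 = k%:R * c0.
Proof.
rewrite /c1 /c0 -!natrM; congr (_%:R).
have := mul_bin_diag N k.-1; rewrite prednK //.
Qed.

Lemma F2 : (1 < k)%N -> (N.-1)%:R * c2 = (k.-1)%:R * c1.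
Proof.
move=> k1; rewrite /c1 /c2 -!natrM; congr (_%:R).
have := mul_bin_diag N.-1 (k - 2).
have -> : (k - 2).+1 = k.-1 by lia.
have -> : N.-1.-1 = (N - 2)%N by lia.
by [].
Qed.

Lemma Tot_gt0 : 0 < Tot.
Proof.
have N0 : (0 < N)%N by lia.
rewrite /Tot (bigD1 (Ordinal N0)) //=.
by rewrite ltr_wpDr ?xpos // sumr_ge0 // => i _; rewrite ltW.
Qed.

Lemma Ss_gt0 (s : {set 'I_N}) : #|s| = k -> 0 < \sum_(i in s) x i.
Proof.
move=> sk; have : (0 < #|s|)%N by rewrite sk.
rewrite card_gt0 => /set0Pn [i iS].
rewrite (bigD1 i) //=.
by rewrite ltr_wpDr ?xpos // sumr_ge0 // => j _; rewrite ltW.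
Qed.

Definition LMSf (s : {set 'I_N}) : R :=
  if #|s| == k then \sum_(i in s) (x i / Tot) * c1^-1 else 0.

Lemma LMS_sum1 : \sum_s LMSf s = 1.
Proof.
rewrite /LMSf -big_mkcond /= sum1_lin.
have c1n : c1 != 0 by rewrite gt_eqF // c1_gt0.
under eq_bigr do rewrite cnt1 ?k0 1?ltnW // -/c1 divfK //.
by rewrite -mulr_suml mulfV // gt_eqF // Tot_gt0.
Qed.


Lemma LMS_incl (i0 : 'I_N) : (1 < k)%N ->
  \sum_(s : {set 'I_N} | i0 \in s) LMSf s = x i0 / Tot + (Tot - x i0) / Tot * (c2 / c1).
Proof.
move=> k1.
have c1n : c1 != 0 by rewrite gt_eqF // c1_gt0.
rewrite /LMSf -big_mkcondl /= sum1_incl.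
rewrite (bigD1 i0) //= finset.setUid cnt1 ?k0 1?ltnW // -/c1 divfK //.
congr (_ + _).
under eq_bigr => j ji0 do rewrite cnt2 1?eq_sym ?k1 1?ltnW // -/c2.
rewrite -!mulr_suml.
have -> : Tot - x i0 = \sum_(j | j != i0) x j.
  by rewrite /Tot (bigD1 i0) //= addrC addrK.
by rewrite -!mulrA [c2 * _]mulrC.
Qed.


Lemma quad : (1 < k)%N ->
  \sum_(s : {set 'I_N} | #|s| == k) (\sum_(i in s) x i) ^+ 2 =
  c1 * \sum_i x i ^+ 2 + c2 * (Tot ^+ 2 - \sum_i x i ^+ 2).
Proof.
move=> k1; rewrite sum2_quad.
transitivity (\sum_i (c1 * x i ^+ 2 + c2 * (x i * Tot - x i ^+ 2))).
  apply: eq_bigr => i _.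
  rewrite (bigD1 i) //= finset.setUid cnt1 ?k0 1?ltnW // -/c1.
  under eq_bigr => j ji do rewrite cnt2 1?eq_sym ?k1 1?ltnW // -/c2.
  have -> : x i * Tot - x i ^+ 2 = x i * \sum_(j | j != i) x j.
    by rewrite /Tot (bigD1 i) //= mulrDr expr2 addrC addKr.
  rewrite -mulr_suml -mulr_sumr.
  by rewrite expr2 mulrC [c2 * _]mulrC.
rewrite big_split /= -!mulr_sumr sumrB -mulr_suml expr2.
by [].
Qed.


Lemma SRS_incl (i0 : 'I_N) :
  \sum_(s : {set 'I_N} | i0 \in s) (if #|s| == k then c0^-1 else 0) = k%:R / N%:R.
Proof.
rewrite -big_mkcondl /= sum_cnst.
have -> : #|[set s : {set 'I_N} | (#|s| == k) && (i0 \in s)]| = cnt N k [set i0].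
  by apply: eq_card => s; rewrite !inE mathcomp.boot.finset.sub1set.
rewrite cnt1 ?k0 1?ltnW // -/c1.
have N0 : N%:R != 0 :> R by rewrite pnatr_eq0; lia.
have c0n : c0 != 0 by rewrite gt_eqF // c0_gt0.
apply: (mulfI N0); rewrite mulrCA F1.
by field; rewrite N0 c0n.
Qed.

Lemma sumRs : \sum_(s : {set 'I_N}) (if #|s| == k then c0^-1 else 0) = 1.
Proof.
rewrite -big_mkcond /= sum_cnst card_draws card_ord -/c0 mulVf //.
by rewrite gt_eqF // c0_gt0.
Qed.

Lemma KL_bound : (1 < k)%N ->
  0 <= \sum_(s : {set 'I_N}) LMSf s * ln (LMSf s / (if #|s| == k then c0^-1 else 0))
    <= N%:R * (\sum_i x i ^+ 2) / (k%:R * Tot ^+ 2).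
Proof.
move=> k1.
have c1n : c1 != 0 by rewrite gt_eqF // c1_gt0.
have c0p := c0_gt0. have Tp := Tot_gt0.
have Dk : forall s : {set 'I_N}, #|s| = k -> LMSf s = (\sum_(i in s) x i) / (Tot * c1).
  move=> s sk; rewrite /LMSf sk eqxx -mulr_suml -mulr_suml invfM mulrA.
  by [].
have Dp : forall s : {set 'I_N}, #|s| = k -> 0 < LMSf s.
  by move=> s sk; rewrite Dk // divr_gt0 ?Ss_gt0 // mulr_gt0 // c1_gt0.
have term : forall s : {set 'I_N},
   LMSf s - (if #|s| == k then c0^-1 else 0) <=
   LMSf s * ln (LMSf s / (if #|s| == k then c0^-1 else 0)) <=
   c0 * LMSf s ^+ 2 - LMSf s.
  move=> s; case: (eqVneq #|s| k) => sk.
    have D0 := Dp s sk.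
    rewrite /= invrK.
    have y0 : 0 < LMSf s * c0 by rewrite mulr_gt0.
    apply/andP; split.
      have := ln_ge_sub1 y0 => h.
      have -> : LMSf s - c0^-1 = LMSf s * (1 - (LMSf s * c0)^-1).
        by field; rewrite !gt_eqF.
      by rewrite ler_pM2l.
    have := ln_le_sub1 y0 => h.
    have -> : c0 * LMSf s ^+ 2 - LMSf s = LMSf s * (LMSf s * c0 - 1) by ring.
    by rewrite ler_pM2l.
  have -> : LMSf s = 0 by rewrite /LMSf (negbTE sk).
  by rewrite !mul0r expr0n mulr0 !subrr lexx.
apply/andP; split.
  apply: le_trans (ler_sum _ (fun s _ => proj1 (andP (term s)))).
  by rewrite sumrB sumRs LMS_sum1 subrr.
apply: le_trans (ler_sum _ (fun s _ => proj2 (andP (term s)))) _.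
rewrite sumrB LMS_sum1 -mulr_sumr.
have -> : \sum_(s : {set 'I_N}) LMSf s ^+ 2 =
    (\sum_(s : {set 'I_N} | #|s| == k) (\sum_(i in s) x i) ^+ 2) / (Tot * c1) ^+ 2.
  rewrite mulr_suml [RHS]big_mkcond /=; apply: eq_bigr => s _.
  case: (eqVneq #|s| k) => sk.
    by rewrite Dk // expr_div_n.
  by rewrite /LMSf (negbTE sk) expr2 mul0r.
rewrite quad // mulrA.
apply: alg_bound.
- by rewrite ltr0n.
- by rewrite ler_nat ltnW.
- rewrite ltr1n; lia.
- exact: c1_gt0.
- exact: c2_ge0.
- exact: F1.
- have e1 : N%:R - 1 = (N.-1)%:R :> R by rewrite -subn1 natrB //; lia.
  have e2 : k%:R - 1 = (k.-1)%:R :> R by rewrite -subn1 natrB //; lia.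
  by rewrite e1 e2; exact: F2.
- exact: Tp.
- by rewrite sumr_ge0 // => i _; rewrite exprn_ge0 // ltW.
Qed.


Lemma Tot_ge (lo : R) : (forall i, lo <= x i) -> N%:R * lo <= Tot.
Proof.
move=> h; have := ler_sum (index_enum 'I_N) (P := predT) (fun i _ => h i).
by rewrite sumr_const card_ord mulr_natl.
Qed.

Lemma Q_le (hi : R) : (forall i, x i <= hi) -> \sum_i x i ^+ 2 <= N%:R * hi ^+ 2.
Proof.
move=> h.
have h2 : forall i : 'I_N, x i ^+ 2 <= hi ^+ 2.
  move=> i; have := xpos i; have := h i => a b.
  by rewrite !expr2 ler_pM // ltW.
have := ler_sum (index_enum 'I_N) (P := predT) (fun i _ => h2 i).
by rewrite sumr_const card_ord mulr_natl.
Qed.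

Lemma KL_bound2 (lo hi : R) : (1 < k)%N -> 0 < lo -> (forall i, lo <= x i <= hi) ->
  0 <= \sum_(s : {set 'I_N}) LMSf s * ln (LMSf s / (if #|s| == k then c0^-1 else 0))
    <= (hi / lo) ^+ 2 / k%:R.
Proof.
move=> k1 lo0 hb.
have /andP[-> H] := KL_bound k1; rewrite andTb.
apply: le_trans H _.
have hl : forall i, lo <= x i by move=> i; case/andP: (hb i).
have hh : forall i, x i <= hi by move=> i; case/andP: (hb i).
have Tl := Tot_ge lo hl.
have Qh := Q_le hi hh.
have Np : 0 < N%:R :> R by rewrite ltr0n; lia.
have kp : 0 < k%:R :> R by rewrite ltr0n.
have Tp := Tot_gt0.
have Q0 : 0 <= \sum_i x i ^+ 2 by rewrite sumr_ge0 // => i _; rewrite exprn_ge0 // ltW.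
have hi0 : 0 < hi by apply: (lt_le_trans lo0); apply: le_trans (hl (Ordinal kN)) (hh (Ordinal kN)).
set Q := \sum_i x i ^+ 2.
rewrite ler_pdivrMr ?mulr_gt0 ?exprn_gt0 //.
have -> : (hi / lo) ^+ 2 / k%:R * (k%:R * Tot ^+ 2) = hi ^+ 2 * (Tot / lo) ^+ 2.
  by field; rewrite !gt_eqF.
have e : N%:R <= Tot / lo by rewrite ler_pdivlMr.
have e2 : N%:R ^+ 2 <= (Tot / lo) ^+ 2 by rewrite !expr2 ler_pM // ltW.
have : N%:R * Q <= N%:R * (N%:R * hi ^+ 2) by rewrite ler_pM2l.
rewrite mulrA -expr2 => e3.
apply: le_trans e3 _; rewrite mulrC ler_pM2l ?exprn_gt0 //.
Qed.

Lemma LMS_incl_bounds (i0 : 'I_N) (lo hi : R) : (1 < k)%N -> 0 < lo -> (forall i, lo <= x i <= hi) ->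
  2^-1 <= k%:R^-1 * N%:R * \sum_(s : {set 'I_N} | i0 \in s) LMSf s <= hi / lo + 1.
Proof.
move=> k1 lo0 hb.
have hl : forall i, lo <= x i by move=> i; case/andP: (hb i).
have hh : forall i, x i <= hi by move=> i; case/andP: (hb i).
have Tl := Tot_ge lo hl.
have Tp := Tot_gt0.
have c1p := c1_gt0.
rewrite LMS_incl //.
have -> : (Tot - x i0) / Tot = 1 - x i0 / Tot by field; rewrite gt_eqF.
apply: pi_alg.
- by rewrite ler_nat.
- by rewrite ltr_nat.
- apply/andP; split; first by rewrite divr_ge0 // ltW // xpos.
  rewrite ler_pdivrMr // mul1r.
  by rewrite /Tot (bigD1 i0) //= lerDl sumr_ge0 // => i _; rewrite ltW.
- have e1 : N%:R - 1 = (N.-1)%:R :> R by rewrite -subn1 natrB //; lia.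
  have e2 : k%:R - 1 = (k.-1)%:R :> R by rewrite -subn1 natrB //; lia.
  by rewrite e1 e2 mulrA F2 //; field; rewrite gt_eqF.
- rewrite mulrA ler_pdivrMr // mulrAC ler_pdivlMr //.
  have := hb i0 => /andP[_ xh]; have xp := xpos i0.
  have Nl : 0 <= N%:R * lo by rewrite mulr_ge0 // ltW.
  have -> : N%:R * x i0 * lo = x i0 * (N%:R * lo) by ring.
  by rewrite ler_pM // ltW.
Qed.

End Fixed.

Lemma Tot_le (R : realType) (N : nat) (x : 'I_N -> R) (hi : R) :
  (forall i, x i <= hi) -> \sum_(j < N) x j <= N%:R * hi.
Proof.
move=> h; have := ler_sum (index_enum 'I_N) (P := predT) (fun i _ => h i).
by rewrite sumr_const card_ord mulr_natl.
Qed.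

Lemma Nx_bounds (R : realType) (N : nat) (x : 'I_N -> R) (lo hi : R) (i : 'I_N) :
  0 < lo -> (forall j, lo <= x j <= hi) ->
  lo / hi <= N%:R * x i / \sum_(j < N) x j <= hi / lo.
Proof.
move=> lo0 hb.
have hl : forall j, lo <= x j by move=> j; case/andP: (hb j).
have hh : forall j, x j <= hi by move=> j; case/andP: (hb j).
have xl := hl i; have xh := hh i.
have N0 : (0 < N)%N by move: (ltn_ord i); lia.
have Np : 0 < N%:R :> R by rewrite ltr0n.
have xp : 0 < x i by apply: lt_le_trans xl.
have hip : 0 < hi by apply: lt_le_trans xh.
have T1 : N%:R * lo <= \sum_(j < N) x j.
  have := ler_sum (index_enum 'I_N) (P := predT) (fun j _ => hl j).
  by rewrite sumr_const card_ord mulr_natl.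
have T2 := @Tot_le R N x hi hh.
set T := \sum_(j < N) x j in T1 T2 *.
have Tp : 0 < T by apply: lt_le_trans T1; rewrite mulr_gt0.
apply/andP; split.
  rewrite ler_pdivrMr // mulrAC ler_pdivlMr //.
  have -> : N%:R * x i * hi = x i * (N%:R * hi) by ring.
  by apply: ler_pM => //; apply: ltW.
rewrite ler_pdivrMr // mulrAC ler_pdivlMr //.
have -> : N%:R * x i * lo = x i * (N%:R * lo) by ring.
by apply: ler_pM => //; [apply: ltW | apply: mulr_ge0; apply: ltW].
Qed.

Local Open Scope classical_set_scope.
Local Open Scope ring_scope.

Theorem lemma1 (R : realType) (d : measure_display) (T : measurableType d)
  (P : probability T R) (X : nat -> {RV P >-> R}) (N n : nat -> nat)
  (hiid : iid P X)
  (hpos : forall i omega, 0 < X i omega)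
  (hnN : forall nu, (n nu < N nu)%N)
  (hnest : {homo N : a b / (a <= b)%N})
  (hN : N @ \oo --> \oo)
  (hn : n @ \oo --> \oo)
  (hC2 : C2 P X N) :
  high_entropy P N n (LMS N n (fun i omega => X i omega)) /\
  incl_bounded P N n (SRSWOR N n) /\
  incl_bounded P N n (LMS N n (fun i omega => X i omega)) /\
  (forall D : design N,
     is_design N n D -> high_entropy P N n D ->
     piPS P N n (fun i omega => X i omega) D -> incl_bounded P N n D).
Proof.
have [_ [_ hK]] := hC2.
have hn2 : \forall nu \near \oo, (2 <= n nu)%N.
  by apply: (hn [set m | (2 <= m)%N]); exists 2.
have Npos : forall nu, (0 < N nu)%N by move=> nu; have := hnN nu; lia.
have hlo : forall nu omega, 0 < pop_min X N nu omega.
  move=> nu omega; rewrite /pop_min; apply: (big_ind (fun v => 0 < v)) => //.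
  by move=> a b a0 b0; rewrite lt_min a0 b0.
have hb : forall nu omega (i : 'I_(N nu)),
    pop_min X N nu omega <= X i omega <= pop_max X N nu omega.
  by move=> nu omega i; apply/andP; split; [exact: bigmin_le | exact: le_bigmax].
split.
  exists (fun nu omega (i : 'I_(N nu)) => (N nu)%:R^-1); split.
    move=> nu omega; split.
      by move=> i; rewrite invr_gt0 ltr0n.
    rewrite sumr_const card_ord -[X in X = 1]mulr_natl mulfV //.
    by rewrite pnatr_eq0 -lt0n.
  apply: filterS hK => omega [K hKe].
  apply/cvgr0Pnorm_le => e e0.
  pose m := (Num.truncn (K ^+ 2 / e)).+1.
  have hm : \forall nu \near \oo, (m <= n nu)%N.
    by apply: (hn [set j | (m <= j)%N]); exists m.
  apply: filterS (filterI hn2 (filterI hm hKe)) => nu [n2 [mn hKnu]].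
  have kN := hnN nu.
  have k0 : (0 < n nu)%N by lia.
  have hR : forall s : {set 'I_(N nu)}, @rejective R d T N n (fun nu omega (i : 'I_(N nu)) => (N nu)%:R^-1) nu omega s
      = if #|s| == n nu then ('C(N nu, n nu))%:R^-1 else 0.
    have a0 : (N nu)%:R^-1 != 0 :> R by rewrite invr_eq0 pnatr_eq0 -lt0n.
    move=> s; rewrite /rejective /=.
    exact (@rej_unif R (N nu) (n nu) (fun _ => (N nu)%:R^-1) ((N nu)%:R^-1) _ kN a0 (fun _ => erefl) (fun j => in_setT j) s).
  have := @KL_bound2 R (N nu) (n nu) (fun i : 'I_(N nu) => X i omega) (fun i => hpos i omega) kN k0 _ _ n2 (hlo nu omega) (hb nu omega).
  have -> : KL N (LMS N n (fun i omega => X i omega))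
      (rejective N n (fun nu omega (i : 'I_(N nu)) => (N nu)%:R^-1)) nu omega =
      \sum_(s : {set 'I_(N nu)}) LMSf R (N nu) (n nu) (fun i : 'I_(N nu) => X i omega) s *
        ln (LMSf R (N nu) (n nu) (fun i : 'I_(N nu) => X i omega) s /
           (if #|s| == n nu then ('C(N nu, n nu))%:R^-1 else 0)).
    by rewrite /KL; apply: eq_bigr => s _; rewrite hR.
  move=> /andP[h0 h1].
  rewrite ger0_norm //; apply: le_trans h1 _.
  set r := _ / _ in hKnu *.
  have [b1 b2] := andP (hb nu omega (Ordinal (Npos nu))).
  have lop := hlo nu omega.
  have hip : 0 < pop_max (fun x : nat => X x) N nu omega.
    by apply: (lt_le_trans lop); apply: le_trans b1 b2.
  have r0 : 0 <= r by rewrite /r divr_ge0 // ltW.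
  have r2 : r ^+ 2 <= K ^+ 2 by rewrite !expr2 ler_pM.
  have hK2 : K ^+ 2 / e < m%:R := truncnS_gt _.
  have mn' : m%:R <= (n nu)%:R :> R by rewrite ler_nat.
  have np : 0 < (n nu)%:R :> R by rewrite ltr0n.
  rewrite ler_pdivrMr //.
  apply: (le_trans r2).
  rewrite ltr_pdivrMr // in hK2.
  apply: ltW; apply: (lt_le_trans hK2).
  by rewrite mulrC ler_pM2l.
split.
  apply: aeW => omega; exists 1, 1; split; first exact: ltr01.
  split; first exact: ltr01.
  apply: filterS hn2 => nu n2 i.
  have kN := hnN nu.
  have k0 : (0 < n nu)%N by lia.
  rewrite /incl_prob /SRSWOR /= (@SRS_incl R _ _ kN k0 i).
  have -> : (n nu)%:R^-1 * (N nu)%:R * ((n nu)%:R / (N nu)%:R) = 1 :> R.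
    by field; rewrite !pnatr_eq0 -!lt0n k0 Npos.
  by rewrite lexx.
split.
  apply: filterS hK => omega [K hKe].
  exists 2^-1, (`|K| + 1); split; first by rewrite invr_gt0 ltr0n.
  split; first by have := normr_ge0 K; lra.
  apply: filterS (filterI hn2 hKe) => nu [n2 hKnu] i.
  have kN := hnN nu.
  have k0 : (0 < n nu)%N by lia.
  have := @LMS_incl_bounds R (N nu) (n nu) (fun i : 'I_(N nu) => X i omega) (fun i => hpos i omega) kN k0 i _ _ n2 (hlo nu omega) (hb nu omega).
  move=> /andP[c1 c2]; apply/andP; split; first exact: c1.
  apply: (le_trans c2); rewrite lerD2r.
  by apply: (le_trans hKnu); exact: ler_norm.
move=> D _ _ hpi.
apply: filterS (filterI hpi hK) => omega [hp [K hKe]].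
have Kp : 0 < `|K| + 1 by have := normr_ge0 K; lra.
exists (`|K| + 1)^-1, (`|K| + 1); split; first by rewrite invr_gt0.
split; first by [].
apply: filterS (filterI hn2 (filterI hp hKe)) => nu [n2 [hpn hKnu]] i.
have k0 : (0 < n nu)%N by lia.
rewrite hpn.
have -> : (n nu)%:R^-1 * (N nu)%:R * ((n nu)%:R * X i omega / pop_total (fun i omega => X i omega) N nu omega)
   = (N nu)%:R * X i omega / \sum_(j < N nu) X j omega :> R.
  have Tp : 0 < \sum_(j < N nu) X j omega.
    rewrite (bigD1 (Ordinal (Npos nu))) //= ltr_wpDr ?hpos // sumr_ge0 // => j _.
    exact: ltW (hpos _ _).
  rewrite /pop_total; field.
  by rewrite pnatr_eq0 -lt0n k0 gt_eqF.
have := @Nx_bounds R (N nu) (fun i : 'I_(N nu) => X i omega) _ _ i (hlo nu omega) (hb nu omega).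
move=> /andP[c1 c2].
have [b1 b2] := andP (hb nu omega (Ordinal (Npos nu))).
have lop := hlo nu omega.
have hip : 0 < pop_max (fun x : nat => X x) N nu omega.
  by apply: (lt_le_trans lop); apply: le_trans b1 b2.
have rK : pop_max (fun x : nat => X x) N nu omega / pop_min (fun x : nat => X x) N nu omega <= `|K| + 1.
  by apply: (le_trans hKnu); have := ler_norm K; lra.
apply/andP; split.
  apply: le_trans c1; rewrite -invf_div lef_pV2 ?posrE ?divr_gt0 //.
by apply: (le_trans c2).
Qed.
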